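(* Every $1$-perfect orientation of a connected graph has at most one sink.
   Context: An orientation of a graph $G$ is $1$-perfect if for every vertex $v$ the out-neighborhood of $v$ is a clique in $G$. A sink is a vertex of out-degree $0$. *)

(* Defs.v *)
From mathcomp Require Import all_boot.
Set Implicit Arguments. Unset Strict Implicit. Unset Printing Implicit Defensive.

Definition simple_graph (T : finType) (e : rel T) : Prop :=
  symmetric e /\ irreflexive e.

Definition connected_graph (T : finType) (e : rel T) : Prop :=
  forall x y : T, connect e x y.

Definition orientation (T : finType) (e o : rel T) : Prop :=
  (forall x y, o x y -> e x y) /\
  (forall x y, e x y -> (o x y (+) o y x)).

Definition out_nbhd (T : finType) (o : rel T) (v : T) : {set T} :=
  [set w | o v w].

Definition is_clique (T : finType) (e : rel T) (A : {set T}) : Prop :=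
  forall u w, u \in A -> w \in A -> u != w -> e u w.

Definition one_perfect (T : finType) (e o : rel T) : Prop :=
  orientation e o /\ forall v, is_clique e (out_nbhd o v).

Definition sink (T : finType) (o : rel T) (v : T) : Prop :=
  #|out_nbhd o v| = 0.

(* Main.v *)
Require Import Defs.
From mathcomp Require Import all_boot.

Lemma sink_no_out (T : finType) (o : rel T) w v : sink o v -> o v w = false.
Proof.
move=> H; apply/negbTE/negP => Hw.
have := card0_eq H w; rewrite /out_nbhd inE Hw //.
Qed.

Fixpoint dp (T : finType) (o : rel T) (u : T) (k : nat) (x : T) : Prop :=
  match k with
  | 0 => x = u
  | k'.+1 => exists x', o x x' /\ @dp T o u k' x'
  end.

Theorem lemma2p9 (T : finType) (e o : rel T) :
  simple_graph e -> connected_graph e -> one_perfect e o ->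
  forall u v : T, sink o u -> sink o v -> u = v.
Proof.
move=> [Hsym Hirr] Hconn [[Hoe Hxor] Hcl] u v Su Sv.
have step : forall k x y, @dp T o u k x -> e x y -> exists j, @dp T o u j y.
  elim=> [|k IH] x y /=.
    move=> -> Hy; exists 1; exists u; split => //.
    by move: (Hxor _ _ Hy); rewrite (@sink_no_out T o y u Su).
  move=> [x' [Hxx' Hk]] Hy.
  case/orP: (orbN (o y x)) => Hyx.
    by exists k.+2; exists x; split => //; exists x'.
  have Hxy : o x y by move: (Hxor _ _ Hy); rewrite (negbTE Hyx) addbF.
  case: (eqVneq x' y) => [<-|Hne]; first by exists k.
  apply: (IH x' y Hk).
  apply: (Hcl x) => //; by rewrite /out_nbhd inE.
have reach : forall p a k, path e a p -> @dp T o u k a -> exists j, @dp T o u j (last a p).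
  elim=> [|b p IH] a k /=; first by move=> _ H; exists k.
  move=> /andP [Hab Hp] Hk.
  have [j Hj] := step _ _ _ Hk Hab.
  exact: (IH b j Hp Hj).
have [p Hp Hl] := connectP (Hconn u v).
have [j Hj] := reach p u 0 Hp erefl.
rewrite -Hl in Hj.
case: j Hj => [|j] /=; first by move=> ->.
move=> [x' [H _]]; by rewrite (@sink_no_out T o x' v Sv) in H.
Qed.
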